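(* Fix an episode $k\ge1$ of algorithm IHMDP-VCG and condition on $\mathcal F^{[k-1]}$, the $\sigma$-algebra of all events up to the end of episode $k-1$. Let $\nu^{[k]}$ be the stationary distribution of the Markov chain on $\mathcal S$ with transition matrix $P^{\pi^{[k]}}(s'|s)=\sum_a P(s'|s,a)\pi^{[k]}(a|s)$, and $\rho^{[k]}(s,a)=\nu^{[k]}(s)\pi^{[k]}(a|s)$. For a round $t$ of episode $k$, let $\mathbb E[\nu^t](s)=\Pr(s^t=s\mid\mathcal F^{[k-1]})$ and $\mathbb E[\rho^t](s,a)=\mathbb E[\nu^t](s)\pi^{[k]}(a|s)$. Then for every round $t$ in the stationary phase of episode $k$, $\|\mathbb E[\rho^t]-\rho^{[k]}\|_1=\|\mathbb E[\nu^t]-\nu^{[k]}\|_1\le 2/\sqrt k$.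
   Context: $\mathcal S,\mathcal A$ finite, $S=|\mathcal S|$, $P$ a transition kernel with $P(s'|s,a)\ge\alpha>0$ for all $s,s',a$; states evolve by $s^{t+1}\sim P(\cdot|s^t,a^t)$. In algorithm IHMDP-VCG, time is divided into episodes $k=1,2,\dots$; episode $k$ starts at round $\tau^{[k]}$ and consists of a mixing phase of $d^{[k]}=\frac{\log k}{\alpha S}$ rounds (rounds $\tau^{[k]},\dots,\tau^{[k]}+d^{[k]}-1$) followed by a stationary phase (subsequent rounds of the episode). A stationary policy $\pi^{[k]}$, determined by the history up to the end of episode $k-1$, is used to draw $a^t\sim\pi^{[k]}(\cdot|s^t)$ in every round $t$ of episode $k$ (both phases). *)

(* Defs.v *)
From mathcomp Require Import all_boot all_order all_algebra.
From mathcomp Require Import reals exp.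
Set Implicit Arguments. Unset Strict Implicit. Unset Printing Implicit Defensive.
Import Order.TTheory GRing.Theory Num.Theory.
Local Open Scope ring_scope.

Section Defs.
Variables (R : realType) (S A : finType).

Definition is_distr (mu : S -> R) : Prop :=
  (forall s, 0 <= mu s) /\ \sum_(s : S) mu s = 1.

(* transition kernel P(s'|s,a) written P s a s' *)
Definition is_kernel (P : S -> A -> S -> R) : Prop :=
  (forall s a s', 0 <= P s a s') /\ (forall s a, \sum_(s' : S) P s a s' = 1).

(* stationary policy pi(a|s) written pi s a *)
Definition is_policy (pi : S -> A -> R) : Prop :=
  (forall s a, 0 <= pi s a) /\ (forall s, \sum_(a : A) pi s a = 1).

Definition Ppi (P : S -> A -> S -> R) (pi : S -> A -> R) (s s' : S) : R :=
  \sum_(a : A) P s a s' * pi s a.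

Definition is_stationary (P : S -> A -> S -> R) (pi : S -> A -> R) (nu : S -> R) : Prop :=
  is_distr nu /\ forall s', \sum_(s : S) nu s * Ppi P pi s s' = nu s'.

(* Law of s^(tau+n), given the (conditional) law mu0 of s^tau, when in every
   round a ~ pi(.|s) and s' ~ P(.|s,a):
   Pr(s^{t+1}=s') = sum_{s,a} Pr(s^t = s) pi(a|s) P(s'|s,a). *)
Fixpoint state_law (P : S -> A -> S -> R) (pi : S -> A -> R) (mu0 : S -> R)
    (n : nat) : S -> R :=
  match n with
  | 0 => mu0
  | n'.+1 => fun s' =>
      \sum_(s : S) \sum_(a : A) state_law P pi mu0 n' s * pi s a * P s a s'
  end.

Definition sa_dist (pi : S -> A -> R) (nu : S -> R) (sa : S * A) : R :=
  nu sa.1 * pi sa.1 sa.2.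

Definition l1_S (f g : S -> R) : R := \sum_(s : S) `|f s - g s|.
Definition l1_SA (f g : S * A -> R) : R := \sum_(sa : S * A) `|f sa - g sa|.

End Defs.

(* Main.v *)
Require Import Defs.
From mathcomp Require Import all_boot all_order all_algebra.
From mathcomp Require Import reals exp.
From mathcomp Require Import ring lra sequences.
Import Order.TTheory GRing.Theory Num.Theory.
Local Open Scope ring_scope.

Section Helpers.
Variables (R : realType) (S A : finType)
    (P : S -> A -> S -> R) (alpha : R) (pi : S -> A -> R) (mu0 nu : S -> R).
Hypotheses (HK : is_kernel P) (Hal : forall s a s', alpha <= P s a s')
  (Hpi : is_policy pi) (Hmu0 : is_distr mu0) (Hnu : is_stationary P pi nu).

Lemma Ppi_ge s s' : alpha <= Ppi P pi s s'.
Proof.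
rewrite /Ppi; have <- : \sum_a alpha * pi s a = alpha.
  by rewrite -big_distrr /= Hpi.2 mulr1.
apply: ler_sum => a _; apply: ler_wpM2r; [exact: Hpi.1|exact: Hal].
Qed.

Lemma Ppi_sum s : \sum_s' Ppi P pi s s' = 1.
Proof.
rewrite /Ppi exchange_big /= -(Hpi.2 s); apply: eq_bigr => a _.
by rewrite -big_distrl /= HK.2 mul1r.
Qed.

Lemma law_step n s' : state_law P pi mu0 n.+1 s' =
  \sum_s state_law P pi mu0 n s * Ppi P pi s s'.
Proof.
rewrite /= /Ppi; apply: eq_bigr => s _; rewrite big_distrr /=.
by apply: eq_bigr => a _; rewrite -mulrA (mulrC (pi s a)).
Qed.

Lemma law_sum n : \sum_s state_law P pi mu0 n s = 1.
Proof.
elim: n => [|n IH]; first exact: Hmu0.2.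
under eq_bigr do rewrite law_step.
rewrite exchange_big /= -IH; apply: eq_bigr => s _.
by rewrite -big_distrr /= Ppi_sum mulr1.
Qed.

Lemma contract n : l1_S (state_law P pi mu0 n.+1) nu <=
  (1 - alpha * #|S|%:R) * l1_S (state_law P pi mu0 n) nu.
Proof.
set L := state_law P pi mu0 n.
have key s' : state_law P pi mu0 n.+1 s' - nu s' =
   \sum_s (L s - nu s) * (Ppi P pi s s' - alpha).
  rewrite law_step -{1}(Hnu.2 s').
  have -> : \sum_s (L s - nu s) * (Ppi P pi s s' - alpha) =
     \sum_s (L s - nu s) * Ppi P pi s s' - (\sum_s (L s - nu s)) * alpha.
    rewrite big_distrl /= -sumrB; apply: eq_bigr => s _; ring.
  rewrite sumrB law_sum Hnu.1.2 subrr mul0r subr0 -sumrB.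
  by apply: eq_bigr => s _; rewrite mulrBl.
rewrite /l1_S.
apply: (@le_trans _ _ (\sum_s' \sum_s `|L s - nu s| * (Ppi P pi s s' - alpha))).
  apply: ler_sum => s' _; rewrite key.
  apply: (le_trans (ler_norm_sum _ _ _)); apply: ler_sum => s _.
  rewrite normrM (@ger0_norm _ (_ - alpha)) // subr_ge0; exact: Ppi_ge.
rewrite exchange_big /= big_distrr /=; apply: ler_sum => s _.
rewrite -big_distrr /= sumrB Ppi_sum sumr_const mulrC mulr_natr.
by [].
Qed.

End Helpers.


Theorem lemma2 (R : realType) (S A : finType)
    (P : S -> A -> S -> R) (alpha : R) (pi : S -> A -> R)
    (k tau tau_next t : nat) (mu0 nu : S -> R) :
  0 < alpha ->
  is_kernel P ->
  (forall s a s', alpha <= P s a s') ->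
  is_policy pi ->
  is_distr mu0 ->
  is_stationary P pi nu ->
  (1 <= k)%N ->
  (tau <= t)%N -> (t < tau_next)%N ->
  ln (k%:R) / (alpha * #|S|%:R) <= (t - tau)%:R ->
  l1_SA (sa_dist pi (state_law P pi mu0 (t - tau))) (sa_dist pi nu)
    = l1_S (state_law P pi mu0 (t - tau)) nu
  /\ l1_S (state_law P pi mu0 (t - tau)) nu <= 2 / Num.sqrt (k%:R).
Proof.
move=> Ha HK Hal Hpi Hmu0 Hnu Hk _ _ Hln.
set n := (t - tau)%N; set L := state_law P pi mu0 n.
split.
  rewrite /l1_SA /l1_S /sa_dist.
  rewrite -(pair_big xpredT xpredT (fun s a => `|L s * pi s a - nu s * pi s a|)) /=.
  apply: eq_bigr => s _.
  under eq_bigr do rewrite -mulrBl normrM (ger0_norm (Hpi.1 s _)).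
  by rewrite -big_distrr /= Hpi.2 mulr1.
have Spos : (0 < #|S|)%N.
  rewrite lt0n; apply/negP => /eqP h0.
  have h1 := card0_eq h0.
  have := Hmu0.2; rewrite big_pred0 => [/eqP|s]; first by rewrite eq_sym oner_eq0.
  by have := h1 s; rewrite !inE.
have [s0 _] : exists s0 : S, s0 \in xpredT by apply/card_gt0P.
have aS : 0 < alpha * #|S|%:R by rewrite mulr_gt0 // ltr0n.
set c := 1 - alpha * #|S|%:R.
have c0 : 0 <= c.
  have h : \sum_(s' : S) alpha <= \sum_s' Ppi P pi s0 s'.
    by apply: ler_sum => s' _; exact: (@Ppi_ge _ _ _ _ _ _ Hal Hpi).
  move: h; rewrite (@Ppi_sum _ _ _ _ _ HK Hpi s0) sumr_const -mulr_natr.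
  by rewrite subr_ge0.
have bnd m : l1_S (state_law P pi mu0 m) nu <= c ^+ m * 2.
  elim: m => [|m IH].
    rewrite expr0 mul1r /l1_S /=.
    apply: (@le_trans _ _ (\sum_s (`|mu0 s| + `|nu s|))).
      by apply: ler_sum => s _; apply: ler_normB.
    rewrite big_split /=.
    under eq_bigr do rewrite ger0_norm ?(Hmu0.1 _) //.
    under [X in _ + X]eq_bigr do rewrite ger0_norm ?(Hnu.1.1 _) //.
    by rewrite Hmu0.2 Hnu.1.2.
  apply: (le_trans (@contract _ _ _ _ _ _ _ _ HK Hal Hpi Hmu0 Hnu m)).
  by rewrite exprS -mulrA ler_wpM2l.
apply: (le_trans (bnd n)).
have kpos : 0 < (k%:R : R) by rewrite ltr0n.
have ck : c ^+ n <= (k%:R)^-1.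
  apply: (@le_trans _ _ (expR (- (alpha * #|S|%:R)) ^+ n)).
    apply: lerXn2r; rewrite ?nnegrE ?expR_ge0 //.
    by rewrite /c -[X in _ <= X]addr0 -[X in X + _]add0r; have := expR_ge1Dx (- (alpha * #|S|%:R)); rewrite add0r addr0.
  rewrite -expRM_natr (_ : (k%:R)^-1 = expR (- ln (k%:R : R))); last first.
    by rewrite expRN lnK // posrE.
  by rewrite ler_expR mulNr lerN2 mulrC -ler_pdivrMr.
set s := Num.sqrt (k%:R : R).
have s1 : 1 <= s.
  by rewrite /s -{1}sqrtr1 ler_sqrt ?ler1n ?ler0n.
have ks : k%:R = s ^+ 2 by rewrite sqr_sqrtr // ler0n.
have : (k%:R : R)^-1 <= s^-1.
  rewrite lef_pV2 ?posrE ?(lt_le_trans ltr01) // ks; nra.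
move=> h; rewrite mulrC ler_pM2l //; exact: le_trans ck h.
Qed.
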